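(* Let $d\geq1$ and let $\varphi:\mathbb R_+\to\mathbb R$ be smooth with compact support contained in $(0,1)$. For $n\geq1$ and $t\geq0$, let $\mathcal G^n_t$ denote the function on $\mathbb R^d$ whose spatial Fourier transform is $\mathcal F_x(\mathcal G^n_t)(\eta)=\mathbf 1_{\{|\eta|\leq n\}}\frac{\sin(t|\eta|)}{|\eta|}$. For $\xi,\tilde\xi\geq0$ and $\eta,\tilde\eta\in\mathbb R^d\setminus\{0\}$, set $$M^n_\varphi((\xi,\eta),(\tilde\xi,\tilde\eta)):=\frac{1}{4|\eta||\tilde\eta|}\int_0^\infty dt\,\varphi(t)\int_0^tdu\,e^{\imath u(\xi-\tilde\xi)}\mathcal F_x(\mathcal G^n_{t-u})(\eta-\tilde\eta)\int_0^uds\,e^{-\imath s(\xi-|\eta|)}\int_0^udr\,e^{\imath r(\tilde\xi-|\tilde\eta|)}.$$ Then there exist functions $R^n_\varphi$ ($n\geq1$) such that for all $n\geq1$, $\xi,\tilde\xi\geq0$ and $\eta,\tilde\eta\in\mathbb R^d\setminus\{0\}$, $$\int_0^\infty dt\,\varphi(t)\int_0^tdu\,e^{\imath u(\xi-\tilde\xi)}\mathcal F_x(\mathcal G^n_{t-u})(\eta-\tilde\eta)\int_0^uds\,e^{-\imath\xi s}\mathcal F_x(\mathcal G^n_s)(\eta)\int_0^udr\,e^{\imath\tilde\xi r}\mathcal F_x(\mathcal G^n_r)(\tilde\eta)$$ $$=\mathbf 1_{\{|\eta|\leq n\}}\mathbf 1_{\{|\tilde\eta|\leq n\}}\Big[M^n_\varphi((\xi,\eta),(\tilde\xi,\tilde\eta))+R^n_\varphi((\xi,\eta),(\tilde\xi,\tilde\eta))\Big],$$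 and, for every $\kappa\in[0,1]$, there is a constant $C$ (independent of $n,\xi,\tilde\xi,\eta,\tilde\eta$) with $$\sup_{n\geq1}\big|R^n_\varphi((\xi,\eta),(\tilde\xi,\tilde\eta))\big|\leq\frac{C}{|\eta||\tilde\eta|}\bigg[\frac{1}{|\xi-|\eta||^\kappa\,|\tilde\xi+|\tilde\eta||}+\frac{1}{|\xi+|\eta||\,|\tilde\xi+|\tilde\eta||}+\frac{1}{|\xi+|\eta||\,|\tilde\xi-|\tilde\eta||^\kappa}\bigg].$$
   Context: Spatial Fourier transform: $\mathcal F_x\psi(\eta)=\int_{\mathbb R^d}e^{-\imath\langle\eta,x\rangle}\psi(x)\,dx$. Terms with a vanishing denominator in the bound are interpreted as $+\infty$. *)

(* Defs.v *)
From Stdlib Require Import Reals.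
From mathcomp Require Import all_boot all_algebra.
From mathcomp Require Import Rstruct.
From Coquelicot Require Import Coquelicot.
Set Implicit Arguments.
Unset Strict Implicit.
Open Scope R_scope.

Definition vnorm (d : nat) (v : 'rV[R]_d) : R :=
  sqrt (\sum_(i < d) (v ord0 i * v ord0 i))%R.

Definition vsub (d : nat) (v w : 'rV[R]_d) : 'rV[R]_d :=
  GRing.add v (GRing.opp w).

Definition cis (x : R) : C := (cos x, sin x).

Definition CInt (f : R -> C) (a b : R) : C :=
  @RInt C_R_CompleteNormedModule f a b.

(* F_x(G^n_t)(eta) = 1_{|eta| <= n} sin(t|eta|)/|eta|
   (continuously extended by its value t at eta = 0). *)
Definition FG (d : nat) (n : nat) (t : R) (eta : 'rV[R]_d) : R :=
  if Rle_dec (vnorm eta) (INR n) then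
    (if Req_EM_T (vnorm eta) 0 then t else sin (t * vnorm eta) / vnorm eta)
  else 0.

Definition indic (d : nat) (n : nat) (eta : 'rV[R]_d) : R :=
  if Rle_dec (vnorm eta) (INR n) then 1 else 0.

Definition smooth_supp01 (phi : R -> R) : Prop :=
  (forall (k : nat) (x : R), ex_derive_n phi k x) /\
  exists a b : R, 0 < a /\ a <= b /\ b < 1 /\
    forall x, (x < a \/ b < x) -> phi x = 0.

(* The left-hand side integral.  Since supp phi is in (0,1), the
   t-integral over [0,oo) is the integral over [0,1]. *)
Definition LHSint (d : nat) (phi : R -> R) (n : nat)
    (xi : R) (eta : 'rV[R]_d) (xi' : R) (eta' : 'rV[R]_d) : C :=
  CInt (fun t =>
    Cmult (RtoC (phi t))
      (CInt (fun u =>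
         Cmult (Cmult (Cmult (cis (u * (xi - xi'))) (RtoC (FG n (t - u) (vsub eta eta'))))
           (CInt (fun s => Cmult (cis (- (xi * s))) (RtoC (FG n s eta))) 0 u))
           (CInt (fun r => Cmult (cis (xi' * r)) (RtoC (FG n r eta'))) 0 u))
       0 t)) 0 1.

Definition Mphi (d : nat) (phi : R -> R) (n : nat)
    (xi : R) (eta : 'rV[R]_d) (xi' : R) (eta' : 'rV[R]_d) : C :=
  Cmult (RtoC (1 / (4 * vnorm eta * vnorm eta')))
  (CInt (fun t =>
    Cmult (RtoC (phi t))
      (CInt (fun u =>
         Cmult (Cmult (Cmult (cis (u * (xi - xi'))) (RtoC (FG n (t - u) (vsub eta eta'))))
           (CInt (fun s => cis (- (s * (xi - vnorm eta)))) 0 u))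
           (CInt (fun r => cis (r * (xi' - vnorm eta'))) 0 u))
       0 t)) 0 1).

(* The bracket in the bound; Rpower a k = a^k for a > 0, and a^0 = 1. *)
Definition bound_bracket (d : nat) (kappa : R)
    (xi : R) (eta : 'rV[R]_d) (xi' : R) (eta' : 'rV[R]_d) : R :=
  1 / (Rpower (Rabs (xi - vnorm eta)) kappa * Rabs (xi' + vnorm eta'))
  + 1 / (Rabs (xi + vnorm eta) * Rabs (xi' + vnorm eta'))
  + 1 / (Rabs (xi + vnorm eta) * Rpower (Rabs (xi' - vnorm eta')) kappa).

(* Main.v *)
Require Import Defs.
From Stdlib Require Import Reals Lra.
From mathcomp Require Import all_boot all_algebra.
From mathcomp Require Import Rstruct.
From Coquelicot Require Import Coquelicot.
Open Scope R_scope.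

Lemma Ccont_intro (f : R -> C) x :
  continuous (fun y => fst (f y)) x -> continuous (fun y => snd (f y)) x ->
  @continuous R_UniformSpace C_UniformSpace f x.
Proof.
intros H1 H2 P [eps HP].
have h1 := H1 (ball (fst (f x)) eps) (locally_ball _ eps).
have h2 := H2 (ball (snd (f x)) eps) (locally_ball _ eps).
unfold filtermap in h1, h2.
unfold filtermap. generalize (filter_and _ _ h1 h2).
apply filter_imp. intros y [b1 b2]. apply HP. split; assumption.
Qed.

Lemma Ccont_fst (f : R -> C) x : @continuous R_UniformSpace C_UniformSpace f x ->
  continuous (fun y => fst (f y)) x.
Proof.
intros H. apply (continuous_comp f fst). exact H.
destruct (f x) as [u v]. apply continuous_fst.
Qed.

Lemma Ccont_snd (f : R -> C) x : @continuous R_UniformSpace C_UniformSpace f x ->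
  continuous (fun y => snd (f y)) x.
Proof.
intros H. apply (continuous_comp f snd). exact H.
destruct (f x) as [u v]. apply continuous_snd.
Qed.

Lemma Rcont_mult (f g : R -> R) x : continuous f x -> continuous g x ->
  continuous (fun y => f y * g y) x.
Proof. intros; apply (continuous_mult f g); assumption. Qed.

Lemma Rcont_plus (f g : R -> R) x : continuous f x -> continuous g x ->
  continuous (fun y => f y + g y) x.
Proof. intros; apply (continuous_plus f g); assumption. Qed.

Lemma Rcont_opp (f : R -> R) x : continuous f x ->
  continuous (fun y => - f y) x.
Proof. intros; apply (continuous_opp f); assumption. Qed.

Lemma Rcont_minus (f g : R -> R) x : continuous f x -> continuous g x ->
  continuous (fun y => f y - g y) x.
Proof. intros; apply Rcont_plus; [|apply Rcont_opp]; assumption. Qed.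

Lemma cont_Cmult (f g : R -> C) x :
  @continuous R_UniformSpace C_UniformSpace f x ->
  @continuous R_UniformSpace C_UniformSpace g x ->
  @continuous R_UniformSpace C_UniformSpace (fun y => Cmult (f y) (g y)) x.
Proof.
intros Hf Hg. apply Ccont_intro; simpl.
- apply Rcont_minus; apply Rcont_mult; (apply Ccont_fst || apply Ccont_snd); assumption.
- apply Rcont_plus; apply Rcont_mult; (apply Ccont_fst || apply Ccont_snd); assumption.
Qed.

Lemma cont_Cplus (f g : R -> C) x :
  @continuous R_UniformSpace C_UniformSpace f x ->
  @continuous R_UniformSpace C_UniformSpace g x ->
  @continuous R_UniformSpace C_UniformSpace (fun y => Cplus (f y) (g y)) x.
Proof.
intros Hf Hg. apply Ccont_intro; simpl;
apply Rcont_plus; (apply Ccont_fst || apply Ccont_snd); assumption.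
Qed.

Lemma cont_Cminus (f g : R -> C) x :
  @continuous R_UniformSpace C_UniformSpace f x ->
  @continuous R_UniformSpace C_UniformSpace g x ->
  @continuous R_UniformSpace C_UniformSpace (fun y => Cminus (f y) (g y)) x.
Proof.
intros Hf Hg. apply Ccont_intro; simpl;
apply Rcont_minus; (apply Ccont_fst || apply Ccont_snd); assumption.
Qed.

Lemma cont_RtoC (h : R -> R) x : continuous h x ->
  @continuous R_UniformSpace C_UniformSpace (fun y => RtoC (h y)) x.
Proof.
intros H. apply Ccont_intro; simpl. exact H. apply continuous_const.
Qed.

Lemma cont_cis (h : R -> R) x : continuous h x ->
  @continuous R_UniformSpace C_UniformSpace (fun y => cis (h y)) x.
Proof.
intros H. apply Ccont_intro; simpl.
- apply (@continuous_comp R_UniformSpace R_UniformSpace R_UniformSpace h cos x H).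
  apply: ex_derive_continuous. auto_derive. easy.
- apply (@continuous_comp R_UniformSpace R_UniformSpace R_UniformSpace h sin x H).
  apply: ex_derive_continuous. auto_derive. easy.
Qed.

Lemma cont_const_C (c : C) x :
  @continuous R_UniformSpace C_UniformSpace (fun _ => c) x.
Proof. apply Ccont_intro; apply continuous_const. Qed.

Lemma ex_CInt (f : R -> C) a b :
  (forall z, @continuous R_UniformSpace C_UniformSpace f z) ->
  @ex_RInt C_R_CompleteNormedModule f a b.
Proof. intros H. apply ex_RInt_continuous. intros z _. apply H. Qed.

Lemma is_CInt (f : R -> C) a b :
  (forall z, @continuous R_UniformSpace C_UniformSpace f z) ->
  @is_RInt C_R_CompleteNormedModule f a b (CInt f a b).
Proof. intros H. apply RInt_correct. apply ex_CInt. exact H. Qed.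

Lemma cont_CInt (f : R -> C) a x :
  (forall z, @continuous R_UniformSpace C_UniformSpace f z) ->
  @continuous R_UniformSpace C_UniformSpace (fun u => CInt f a u) x.
Proof.
intros H. apply (continuous_RInt_1 f a x (fun u => CInt f a u)).
apply filter_forall. intros z. apply is_CInt. exact H.
Qed.

Lemma is_RInt_Cmult (c : C) (f : R -> C) a b l :
  @is_RInt C_R_CompleteNormedModule f a b l ->
  @is_RInt C_R_CompleteNormedModule (fun x => Cmult c (f x)) a b (Cmult c l).
Proof.
intros H.
have H1 := is_RInt_fct_extend_fst (U:=R_NormedModule) (V:=R_NormedModule) f a b l H.
have H2 := is_RInt_fct_extend_snd (U:=R_NormedModule) (V:=R_NormedModule) f a b l H.
apply (is_RInt_fct_extend_pair (U:=R_NormedModule) (V:=R_NormedModule)); simpl.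
- apply (is_RInt_ext (fun x => minus (scal (fst c) (fst (f x))) (scal (snd c) (snd (f x))))).
  intros; reflexivity.
  apply: is_RInt_minus; apply: is_RInt_scal; assumption.
- apply (is_RInt_ext (fun x => plus (scal (fst c) (snd (f x))) (scal (snd c) (fst (f x))))).
  intros; reflexivity.
  apply: is_RInt_plus; apply: is_RInt_scal; assumption.
Qed.

Ltac Ceq := apply injective_projections; simpl.

Lemma Cmod_CInt_le (f : R -> C) t M :
  (forall z, @continuous R_UniformSpace C_UniformSpace f z) -> 0 <= t ->
  (forall x, 0 <= x <= t -> Cmod (f x) <= M) -> Cmod (CInt f 0 t) <= t * M.
Proof.
intros Hc Ht Hb. rewrite Cmod_norm.
replace t with (t - 0) at 2 by ring.
apply (norm_RInt_le_const (V:=C_R_NormedModule) f 0 t). exact Ht.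
intros x Hx. rewrite <- Cmod_norm. apply Hb. exact Hx.
apply is_CInt. exact Hc.
Qed.

Lemma Rabs_sin_le y : Rabs (sin y) <= Rabs y.
Proof.
assert (K : forall y, 0 < y -> Rabs (sin y) <= y).
{ intros z Hz. have h1 := sin_lt_x z Hz. have h2 := SIN_bound z.
  destruct (Rle_lt_dec 1 z).
  - apply Rabs_le. lra.
  - have h3 : 0 < sin z. apply sin_gt_0. lra. have := PI2_1. lra.
    rewrite Rabs_pos_eq; lra. }
destruct (Rtotal_order y 0) as [h|[h|h]].
- rewrite <- Rabs_Ropp, <- sin_neg. rewrite (Rabs_left y h). apply K. lra.
- subst. rewrite sin_0. lra.
- rewrite (Rabs_pos_eq y); [apply K|]; lra.
Qed.

Lemma exp_le_mono a b : a <= b -> exp a <= exp b.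
Proof. intros [h|h]. left; apply exp_increasing; exact h. subst; lra. Qed.

Lemma Rpower_le_aux x k : 0 <= k <= 1 -> (0 < k -> x <> 0) -> 0 <= x ->
  0 < Rpower x k /\ (x <= 1 -> Rpower x k <= 1) /\ (1 <= x -> Rpower x k <= x).
Proof.
intros Hk Hx0 Hx. split; [|split].
- unfold Rpower. apply exp_pos.
- intros Hx1. destruct (Req_dec k 0) as [->|Hk0].
  + unfold Rpower. rewrite Rmult_0_l exp_0. lra.
  + have Hxp : 0 < x. { destruct Hx as [Hx|Hx]; auto. exfalso. apply Hx0. lra. auto. }
    unfold Rpower. rewrite <- exp_0. apply exp_le_mono.
    have := ln_le x 1 Hxp Hx1. rewrite ln_1. nra.
- intros Hx1. rewrite <- (Rpower_1 x) at 2; [|lra]. apply Rle_Rpower; lra.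
Qed.

Lemma cis_int c u : c <> 0 ->
  CInt (fun s => cis (s * c)) 0 u = (sin (u * c) / c, (1 - cos (u * c)) / c).
Proof.
intros Hc. unfold CInt. apply (is_RInt_unique (V:=C_R_CompleteNormedModule)).
apply (is_RInt_fct_extend_pair (U:=R_NormedModule) (V:=R_NormedModule)); simpl.
- replace (sin (u * c) / c) with (minus (sin (u*c)/c) (sin (0*c)/c)).
  2:{ rewrite Rmult_0_l sin_0. unfold minus, plus, opp; simpl. field. exact Hc. }
  apply (is_RInt_derive (fun s => sin (s*c)/c)).
  + intros x _. auto_derive. easy. field. exact Hc.
  + intros x _. apply: ex_derive_continuous. auto_derive. easy.
- replace ((1 - cos (u * c)) / c) with (minus (- cos (u*c)/c) (- cos (0*c)/c)).
  2:{ rewrite Rmult_0_l cos_0. unfold minus, plus, opp; simpl. field. exact Hc. }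
  apply (is_RInt_derive (fun s => - cos (s*c)/c)).
  + intros x _. auto_derive. easy. field. exact Hc.
  + intros x _. apply: ex_derive_continuous. auto_derive. easy.
Qed.

Lemma Cmod_cis x : Cmod (cis x) = 1.
Proof.
unfold Cmod, cis; simpl. have h := sin2_cos2 x. unfold Rsqr in h.
replace (cos x * (cos x * 1) + sin x * (sin x * 1)) with 1 by lra. apply sqrt_1.
Qed.

Lemma cont_cis_lin c z :
  @continuous R_UniformSpace C_UniformSpace (fun s => cis (s * c)) z.
Proof. apply cont_cis. apply: ex_derive_continuous. auto_derive. easy. Qed.

Lemma Abound c k u : 0 <= k <= 1 -> (0 < k -> c <> 0) -> 0 <= u <= 1 ->
  Cmod (CInt (fun s => cis (s * c)) 0 u) <= 2 / Rpower (Rabs c) k.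
Proof.
intros Hk Hc Hu.
have [P0 [P1 P2]] := Rpower_le_aux (Rabs c) k Hk
   (fun h e => Hc h (Rabs_eq_0 c e)) (Rabs_pos c).
have Hu1 : Cmod (CInt (fun s => cis (s * c)) 0 u) <= 1.
{ apply Rle_trans with (u * 1). apply Cmod_CInt_le. intros; apply cont_cis_lin.
  lra. intros; rewrite Cmod_cis; lra. lra. }
destruct (Rle_lt_dec (Rabs c) 1) as [Hs|Hb].
- apply Rle_trans with 1. exact Hu1.
  apply Rle_trans with (2 / 1). lra. apply Rmult_le_compat_l. lra.
  apply Rinv_le_contravar; auto.
- have Hc0 : c <> 0. intros ->. rewrite Rabs_R0 in Hb. lra.
  rewrite cis_int; auto.
  apply Rle_trans with (2 / Rabs c).
  + unfold Cmod; simpl. rewrite <- (sqrt_Rsqr (2 / Rabs c)).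
    2:{ apply Rlt_le, Rdiv_lt_0_compat. lra. lra. }
    apply sqrt_le_1_alt. unfold Rsqr.
    have e : Rabs c * Rabs c = c * c. rewrite <- Rabs_mult, Rabs_pos_eq. ring. nra.
    have := sin2_cos2 (u * c). have := COS_bound (u*c). unfold Rsqr. intros.
    apply Rle_trans with ((2 - 2 * cos (u*c)) / (c*c)).
    * right. have hs : sin(u*c)*sin(u*c) = 1 - cos(u*c)*cos(u*c) by lra.
      transitivity ((sin(u*c)*sin(u*c) + (1-cos(u*c))*(1-cos(u*c)))/(c*c)).
      field. exact Hc0. rewrite hs. f_equal. ring.
    * rewrite <- e. unfold Rdiv. rewrite Rinv_mult. have hp : 0 < / Rabs c * / Rabs c. apply Rmult_lt_0_compat; apply Rinv_0_lt_compat; lra.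
      nra.
  + apply Rmult_le_compat_l. lra. apply Rinv_le_contravar; auto. apply P2. lra.
Qed.

Set Implicit Arguments. Unset Strict Implicit.

Lemma vnorm_ge0 d (v : 'rV[R]_d) : 0 <= vnorm v.
Proof. apply sqrt_pos. Qed.

Lemma FG_decomp d n (w : 'rV[R]_d) : exists al be ga de : R -> R,
  (forall z, continuous al z) /\ (forall z, continuous be z) /\
  (forall z, continuous ga z) /\ (forall z, continuous de z) /\
  forall t u, FG n (t - u) w = al t * be u + ga t * de u.
Proof.
unfold FG. destruct (Rle_dec (vnorm w) (INR n)) as [H|H].
- destruct (Req_EM_T (vnorm w) 0) as [H0|H0].
  + exists (fun t => t), (fun _ => 1), (fun _ => 1), (fun u => - u).
    repeat split; try (intros; apply: ex_derive_continuous; auto_derive; easy).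
    intros t u. simpl. ring.
  + set c := vnorm w.
    exists (fun t => sin (t * c) / c), (fun u => cos (u * c)),
           (fun t => - cos (t * c) / c), (fun u => sin (u * c)).
    repeat split; try (intros; apply: ex_derive_continuous; auto_derive; easy).
    intros t u. simpl. rewrite Rmult_minus_distr_r sin_minus. field. exact H0.
- exists (fun _ => 0), (fun _ => 0), (fun _ => 0), (fun _ => 0).
  repeat split; try (intros; apply continuous_const). intros; simpl; ring.
Qed.

Lemma FG_cont d n (w : 'rV[R]_d) z : continuous (fun x => FG n x w) z.
Proof.
have [al [be [ga [de [H1 [H2 [H3 [H4 H5]]]]]]]] := FG_decomp n w.
apply (continuous_ext (fun x => al x * be 0 + ga x * de 0)).
intros x. rewrite <- H5. rewrite Rminus_0_r. reflexivity.
apply Rcont_plus; apply Rcont_mult; auto; apply continuous_const.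
Qed.

Lemma FG_bound d n (w : 'rV[R]_d) x : 0 <= x -> Rabs (FG n x w) <= x.
Proof.
intros Hx. unfold FG. destruct (Rle_dec (vnorm w) (INR n)) as [H|H].
- destruct (Req_EM_T (vnorm w) 0) as [H0|H0].
  + rewrite Rabs_pos_eq; lra.
  + have hp : 0 < vnorm w. have := vnorm_ge0 w. lra.
    unfold Rdiv. rewrite Rabs_mult Rabs_inv (Rabs_pos_eq (vnorm w)); [|lra].
    apply Rle_trans with (Rabs (x * vnorm w) * / vnorm w).
    apply Rmult_le_compat_r. left; apply Rinv_0_lt_compat; lra. apply Rabs_sin_le.
    rewrite Rabs_mult (Rabs_pos_eq x) // (Rabs_pos_eq (vnorm w)); [|lra].
    right. field. lra.
- rewrite Rabs_R0. exact Hx.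
Qed.

Lemma FG_in d n (eta : 'rV[R]_d) s : vnorm eta <= INR n -> vnorm eta <> 0 ->
  FG n s eta = sin (s * vnorm eta) / vnorm eta.
Proof.
intros H H0. unfold FG. destruct (Rle_dec (vnorm eta) (INR n)); [|contradiction].
destruct (Req_EM_T (vnorm eta) 0); [contradiction|reflexivity].
Qed.

Lemma FG_out d n (eta : 'rV[R]_d) s : ~ vnorm eta <= INR n -> FG n s eta = 0.
Proof.
intros H. unfold FG. destruct (Rle_dec (vnorm eta) (INR n)); [contradiction|reflexivity].
Qed.

Set Implicit Arguments. Unset Strict Implicit.


Lemma integrand_x xi a s : a <> 0 ->
  Cmult (cis (- (xi * s))) (RtoC (sin (s * a) / a)) =
  Cmult (0, - / (2 * a)) (Cminus (cis (- (s * (xi - a)))) (cis (- (s * (xi + a))))).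
Proof.
intros Ha. unfold cis.
replace (s * (xi - a)) with (xi * s - s * a) by ring.
replace (s * (xi + a)) with (xi * s + s * a) by ring.
Ceq; rewrite ?cos_neg ?sin_neg ?sin_minus ?sin_plus ?cos_minus ?cos_plus; field; exact Ha.
Qed.

Lemma integrand_y xi a r : a <> 0 ->
  Cmult (cis (xi * r)) (RtoC (sin (r * a) / a)) =
  Cmult (0, - / (2 * a)) (Cminus (cis (r * (xi + a))) (cis (r * (xi - a)))).
Proof.
intros Ha. unfold cis.
replace (r * (xi - a)) with (xi * r - r * a) by ring.
replace (r * (xi + a)) with (xi * r + r * a) by ring.
Ceq; rewrite ?sin_minus ?sin_plus ?cos_minus ?cos_plus; field; exact Ha.
Qed.

Lemma CInt_lin2 (c : C) (f g : R -> C) u :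
  (forall z, @continuous R_UniformSpace C_UniformSpace f z) ->
  (forall z, @continuous R_UniformSpace C_UniformSpace g z) ->
  CInt (fun s => Cmult c (Cminus (f s) (g s))) 0 u = Cmult c (Cminus (CInt f 0 u) (CInt g 0 u)).
Proof.
intros Hf Hg. unfold CInt. apply (is_RInt_unique (V:=C_R_CompleteNormedModule)).
apply is_RInt_Cmult.
apply (is_RInt_minus (V:=C_R_CompleteNormedModule)); apply is_CInt; assumption.
Qed.

Definition Sx d n xi (eta : 'rV[R]_d) u :=
  CInt (fun s => Cmult (cis (- (xi * s))) (RtoC (FG n s eta))) 0 u.
Definition Sy d n xi' (eta' : 'rV[R]_d) u :=
  CInt (fun r => Cmult (cis (xi' * r)) (RtoC (FG n r eta'))) 0 u.
Definition Am xi a u := CInt (fun s => cis (- (s * (xi - a)))) 0 u.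
Definition Ap xi' a' u := CInt (fun r => cis (r * (xi' - a'))) 0 u.
Definition Ecore d n xi (eta : 'rV[R]_d) xi' (eta' : 'rV[R]_d) u :=
  Cminus (Cmult (Sx n xi eta u) (Sy n xi' eta' u))
    (Cmult (RtoC (1 / (4 * vnorm eta * vnorm eta')))
       (Cmult (Am xi (vnorm eta) u) (Ap xi' (vnorm eta') u))).

Notation Cc f x := (@continuous R_UniformSpace C_UniformSpace f x).

Lemma cont_lin (h : R -> R) x : (forall x, ex_derive h x) -> continuous h x.
Proof. intros H. apply: ex_derive_continuous. apply H. Qed.

Lemma FG_cont_t d n (w : 'rV[R]_d) t z : continuous (fun u => FG n (t - u) w) z.
Proof.
apply (@continuous_comp R_UniformSpace R_UniformSpace R_UniformSpace (fun u => t - u) (fun x => FG n x w)).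
apply cont_lin. intros; auto_derive; easy. apply FG_cont.
Qed.

Lemma Sx_cont d n xi (eta : 'rV[R]_d) z : Cc (Sx n xi eta) z.
Proof.
apply cont_CInt. intros y. apply cont_Cmult. apply cont_cis, cont_lin.
intros; auto_derive; easy. apply cont_RtoC, FG_cont.
Qed.

Lemma Sy_cont d n xi (eta : 'rV[R]_d) z : Cc (Sy n xi eta) z.
Proof.
apply cont_CInt. intros y. apply cont_Cmult. apply cont_cis, cont_lin.
intros; auto_derive; easy. apply cont_RtoC, FG_cont.
Qed.

Lemma Am_cont xi a z : Cc (Am xi a) z.
Proof. apply cont_CInt. intros y. apply cont_cis, cont_lin. intros; auto_derive; easy. Qed.

Lemma Ap_cont xi a z : Cc (Ap xi a) z.
Proof. apply cont_CInt. intros y. apply cont_cis, cont_lin. intros; auto_derive; easy. Qed.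

Lemma Ecore_cont d n xi (eta : 'rV[R]_d) xi' eta' z : Cc (Ecore n xi eta xi' eta') z.
Proof.
apply cont_Cminus. apply cont_Cmult; [apply Sx_cont|apply Sy_cont].
apply cont_Cmult. apply cont_const_C. apply cont_Cmult; [apply Am_cont|apply Ap_cont].
Qed.

Lemma k0_cont c z : Cc (fun u => cis (u * c)) z.
Proof. apply cont_cis_lin. Qed.

Lemma inner_cont d n (w : 'rV[R]_d) (k : R -> C) (F : R -> R -> C) x :
  (forall z, Cc k z) ->
  (forall t u, F t u = Cmult (RtoC (FG n (t - u) w)) (k u)) ->
  Cc (fun t => CInt (F t) 0 t) x.
Proof.
intros Hk HF.
have [al [be [ga [de [H1 [H2 [H3 [H4 H5]]]]]]]] := FG_decomp n w.
apply (continuous_ext (fun t => Cplus (Cmult (RtoC (al t)) (CInt (fun u => Cmult (RtoC (be u)) (k u)) 0 t))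
   (Cmult (RtoC (ga t)) (CInt (fun u => Cmult (RtoC (de u)) (k u)) 0 t)))).
- intros t. symmetry. unfold CInt. apply (is_RInt_unique (V:=C_R_CompleteNormedModule)).
  apply (is_RInt_ext (V:=C_R_CompleteNormedModule) (fun u => Cplus (Cmult (RtoC (al t)) (Cmult (RtoC (be u)) (k u)))
     (Cmult (RtoC (ga t)) (Cmult (RtoC (de u)) (k u))))).
  + intros u _. rewrite HF H5. Ceq; ring.
  + apply (is_RInt_plus (V:=C_R_CompleteNormedModule)); apply is_RInt_Cmult; apply is_CInt.
    intros; apply cont_Cmult. apply cont_RtoC, H2. apply Hk.
    intros; apply cont_Cmult. apply cont_RtoC, H4. apply Hk.
- apply cont_Cplus; apply cont_Cmult.
  apply cont_RtoC, H1. apply cont_CInt. intros; apply cont_Cmult. apply cont_RtoC, H2. apply Hk.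
  apply cont_RtoC, H3. apply cont_CInt. intros; apply cont_Cmult. apply cont_RtoC, H4. apply Hk.
Qed.

Set Implicit Arguments. Unset Strict Implicit.


Lemma Abound' (c : R) k u : 0 <= k <= 1 -> (0 < k -> c <> 0) -> 0 <= u <= 1 ->
  Cmod (CInt (fun s => cis (- (s * c))) 0 u) <= 2 / Rpower (Rabs c) k.
Proof.
intros Hk Hc Hu.
unfold CInt. rewrite (RInt_ext (V:=C_R_CompleteNormedModule) _ (fun s => cis (s * (- c)))). fold (CInt (fun s => cis (s * (- c))) 0 u).
rewrite <- (Rabs_Ropp c). apply Abound; auto. intros h e. apply (Hc h). lra.
intros x _. f_equal. ring.
Qed.

Lemma Bbound c u : 0 < c -> 0 <= u <= 1 ->
  Cmod (CInt (fun s => cis (s * c)) 0 u) <= 2 / c.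
Proof.
intros Hc Hu. have := Abound c 1 u ltac:(lra) (fun _ => ltac:(lra)) Hu.
rewrite Rabs_pos_eq; [|lra]. rewrite Rpower_1; lra.
Qed.

Lemma Bbound' c u : 0 < c -> 0 <= u <= 1 ->
  Cmod (CInt (fun s => cis (- (s * c))) 0 u) <= 2 / c.
Proof.
intros Hc Hu. have := @Abound' c 1 u ltac:(lra) (fun _ => ltac:(lra)) Hu.
rewrite Rabs_pos_eq; [|lra]. rewrite Rpower_1; lra.
Qed.

Lemma Ebound d n xi (eta : 'rV[R]_d) xi' (eta' : 'rV[R]_d) k u :
  vnorm eta <= INR n -> vnorm eta' <= INR n -> vnorm eta <> 0 -> vnorm eta' <> 0 ->
  0 <= xi -> 0 <= xi' -> 0 <= k <= 1 ->
  (0 < k -> xi <> vnorm eta) -> (0 < k -> xi' <> vnorm eta') -> 0 <= u <= 1 ->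
  Cmod (Ecore n xi eta xi' eta' u) <=
    bound_bracket k xi eta xi' eta' / (vnorm eta * vnorm eta').
Proof.
intros Hn Hn' H0 H0' Hxi Hxi' Hk Hk1 Hk2 Hu.
set a := vnorm eta. set a' := vnorm eta'.
have ha : 0 < a. have := vnorm_ge0 eta. fold a in H0 |- *. lra.
have ha' : 0 < a'. have := vnorm_ge0 eta'. fold a' in H0' |- *. lra.
set B := CInt (fun s => cis (- (s * (xi + a)))) 0 u.
set A2 := CInt (fun r => cis (r * (xi' + a'))) 0 u.
have eSx : Sx n xi eta u = Cmult (0, - / (2 * a)) (Cminus (Am xi a u) B).
{ unfold Sx, Am, B. rewrite <- CInt_lin2.
  apply (RInt_ext (V:=C_R_CompleteNormedModule)). intros s _.
  rewrite FG_in; auto. apply integrand_x; auto.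
  intros; apply cont_cis, cont_lin; intros; auto_derive; easy.
  intros; apply cont_cis, cont_lin; intros; auto_derive; easy. }
have eSy : Sy n xi' eta' u = Cmult (0, - / (2 * a')) (Cminus A2 (Ap xi' a' u)).
{ unfold Sy, Ap, A2. rewrite <- CInt_lin2.
  apply (RInt_ext (V:=C_R_CompleteNormedModule)). intros s _.
  rewrite FG_in; auto. apply integrand_y; auto.
  intros; apply cont_cis, cont_lin; intros; auto_derive; easy.
  intros; apply cont_cis, cont_lin; intros; auto_derive; easy. }
have eE : Ecore n xi eta xi' eta' u =
  Cmult (RtoC (- (1 / (4 * a * a'))))
    (Cplus (Cminus (Cmult (Am xi a u) A2) (Cmult B A2)) (Cmult B (Ap xi' a' u))).
{ unfold Ecore. fold a a'. rewrite eSx eSy. Ceq; field; lra. }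
rewrite eE Cmod_mult Cmod_R Rabs_Ropp Rabs_pos_eq.
2:{ apply Rlt_le, Rdiv_lt_0_compat. lra. apply Rmult_lt_0_compat; [|lra]. lra. }
have bA : Cmod (Am xi a u) <= 2 / Rpower (Rabs (xi - a)) k.
{ apply Abound'; auto. intros h e. apply (Hk1 h). fold a. lra. }
have bAp : Cmod (Ap xi' a' u) <= 2 / Rpower (Rabs (xi' - a')) k.
{ apply Abound; auto. intros h e. apply (Hk2 h). fold a'. lra. }
have bB : Cmod B <= 2 / (xi + a). apply Bbound'; lra.
have bA2 : Cmod A2 <= 2 / (xi' + a'). apply Bbound; lra.
have [P1 _] := Rpower_le_aux (Rabs (xi - a)) k Hk
   (fun h e => Hk1 h ltac:(have := Rabs_eq_0 _ e; fold a; lra)) (Rabs_pos _).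
have [P2 _] := Rpower_le_aux (Rabs (xi' - a')) k Hk
   (fun h e => Hk2 h ltac:(have := Rabs_eq_0 _ e; fold a'; lra)) (Rabs_pos _).
have c1 := Cmod_ge_0 (Am xi a u). have c2 := Cmod_ge_0 (Ap xi' a' u).
have c3 := Cmod_ge_0 B. have c4 := Cmod_ge_0 A2.
apply Rle_trans with (1 / (4 * a * a') *
   (Cmod (Am xi a u) * Cmod A2 + Cmod B * Cmod A2 + Cmod B * Cmod (Ap xi' a' u))).
{ apply Rmult_le_compat_l. apply Rlt_le, Rdiv_lt_0_compat. lra. apply Rmult_lt_0_compat; [|lra]. lra.
  eapply Rle_trans. apply Cmod_triangle. rewrite !Cmod_mult.
  apply Rplus_le_compat_r. unfold Cminus. eapply Rle_trans. apply Cmod_triangle.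
  rewrite Cmod_opp !Cmod_mult. lra. }
apply Rle_trans with (1 / (4 * a * a') *
   (2 / Rpower (Rabs (xi - a)) k * (2 / (xi' + a')) + 2 / (xi + a) * (2 / (xi' + a'))
    + 2 / (xi + a) * (2 / Rpower (Rabs (xi' - a')) k))).
{ apply Rmult_le_compat_l. apply Rlt_le, Rdiv_lt_0_compat. lra. apply Rmult_lt_0_compat; [|lra]. lra.
  repeat apply Rplus_le_compat; apply Rmult_le_compat; auto. }
right. unfold bound_bracket. fold a a'.
rewrite (Rabs_pos_eq (xi + a)); [|lra]. rewrite (Rabs_pos_eq (xi' + a')); [|lra].
field. repeat split; lra.
Qed.

Unset Implicit Arguments. Set Strict Implicit.


Definition Rdef d (phi : R -> R) n xi (eta : 'rV[R]_d) xi' (eta' : 'rV[R]_d) : C :=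
  if Rle_dec (vnorm eta) (INR n) then
    if Rle_dec (vnorm eta') (INR n) then
      CInt (fun t => Cmult (RtoC (phi t))
        (CInt (fun u => Cmult (Cmult (cis (u * (xi - xi'))) (RtoC (FG n (t - u) (vsub eta eta'))))
            (Ecore n xi eta xi' eta' u)) 0 t)) 0 1
    else RtoC 0
  else RtoC 0.

Lemma CInt_zero a b : CInt (fun _ => RtoC 0) a b = RtoC 0.
Proof. unfold CInt. rewrite RInt_const. exact (scal_zero_r (V:=C_R_NormedModule) (b - a)). Qed.

Lemma inv_nonneg z : 0 <= z -> 0 <= 1 / z.
Proof.
intros [h|h]. apply Rlt_le, Rdiv_lt_0_compat; lra.
subst. unfold Rdiv. rewrite Rinv_0. lra.
Qed.

Lemma bracket_nonneg d k xi (eta : 'rV[R]_d) xi' (eta' : 'rV[R]_d) :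
  0 <= bound_bracket k xi eta xi' eta'.
Proof.
unfold bound_bracket.
have p1 : forall x, 0 <= Rpower x k. intros; unfold Rpower; apply Rlt_le, exp_pos.
repeat apply Rplus_le_le_0_compat; apply inv_nonneg; apply Rmult_le_pos;
  (apply p1 || apply Rabs_pos).
Qed.


Lemma Sy_zero d n xi' (eta' : 'rV[R]_d) u : ~ vnorm eta' <= INR n -> Sy n xi' eta' u = RtoC 0.
Proof.
intros H. unfold Sy. rewrite <- (CInt_zero 0 u). unfold CInt.
apply (RInt_ext (V:=C_R_CompleteNormedModule)). intros r _.
rewrite FG_out //. Ceq; ring.
Qed.

Lemma Sx_zero d n xi (eta : 'rV[R]_d) u : ~ vnorm eta <= INR n -> Sx n xi eta u = RtoC 0.
Proof.
intros H. unfold Sx. rewrite <- (CInt_zero 0 u). unfold CInt.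
apply (RInt_ext (V:=C_R_CompleteNormedModule)). intros r _.
rewrite FG_out //. Ceq; ring.
Qed.

Lemma LHS_zero d phi n xi (eta : 'rV[R]_d) xi' (eta' : 'rV[R]_d) :
  (forall u, Cmult (Sx n xi eta u) (Sy n xi' eta' u) = RtoC 0) ->
  LHSint phi n xi eta xi' eta' = RtoC 0.
Proof.
intros H. unfold LHSint. rewrite <- (CInt_zero 0 1). unfold CInt.
apply (RInt_ext (V:=C_R_CompleteNormedModule)). intros t _.
rewrite <- (CInt_zero 0 t). unfold CInt.
rewrite (RInt_ext (V:=C_R_CompleteNormedModule) _ (fun _ => RtoC 0)).
fold (CInt (fun _ => RtoC 0) 0 t). rewrite CInt_zero. Ceq; ring.
intros u _. have := H u. unfold Sx, Sy. intros e.
rewrite <- Cmult_assoc. change (Cmult (Cmult (cis (u * (xi - xi'))) (RtoC (FG n (t - u) (vsub eta eta')))) 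
   (Cmult (Sx n xi eta u) (Sy n xi' eta' u)) = RtoC 0).
rewrite H. Ceq; ring.
Qed.


Lemma CeqP (x y : C) : @eq R (fst x) (fst y) -> @eq R (snd x) (snd y) -> x = y.
Proof. intros; apply injective_projections; assumption. Qed.
Ltac Ceq2 := apply CeqP; simpl.


Lemma main_eq d (phi : R -> R) (phic : forall x, continuous phi x) n xi (eta : 'rV[R]_d) xi' (eta' : 'rV[R]_d) :
  vnorm eta <= INR n -> vnorm eta' <= INR n ->
  LHSint phi n xi eta xi' eta' =
  Cplus (Mphi phi n xi eta xi' eta')
   (CInt (fun t => Cmult (RtoC (phi t))
        (CInt (fun u => Cmult (Cmult (cis (u * (xi - xi'))) (RtoC (FG n (t - u) (vsub eta eta'))))
            (Ecore n xi eta xi' eta' u)) 0 t)) 0 1).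
Proof.
intros Hn Hn'.
set r := 1 / (4 * vnorm eta * vnorm eta').
set w := vsub eta eta'.
set a := vnorm eta. set a' := vnorm eta'.
set K0 := fun t u => Cmult (cis (u * (xi - xi'))) (RtoC (FG n (t - u) w)).
set J1 := fun t => CInt (fun u => Cmult (Cmult (K0 t u) (Am xi a u)) (Ap xi' a' u)) 0 t.
set J2 := fun t => CInt (fun u => Cmult (K0 t u) (Ecore n xi eta xi' eta' u)) 0 t.
have K0c : forall t z, Cc (K0 t) z.
{ intros t z. apply cont_Cmult. apply cont_cis_lin. apply cont_RtoC, FG_cont_t. }
have step1 : forall t, CInt (fun u => Cmult (Cmult (K0 t u) (Sx n xi eta u)) (Sy n xi' eta' u)) 0 t
   = Cplus (Cmult (RtoC r) (J1 t)) (J2 t).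
{ intros t. unfold J1, J2, CInt. apply (is_RInt_unique (V:=C_R_CompleteNormedModule)).
  apply (is_RInt_ext (V:=C_R_CompleteNormedModule)
    (fun u => Cplus (Cmult (RtoC r) (Cmult (Cmult (K0 t u) (Am xi a u)) (Ap xi' a' u)))
                    (Cmult (K0 t u) (Ecore n xi eta xi' eta' u)))).
  { intros u _. unfold Ecore. fold a a' r.
    generalize (Sx n xi eta u) (Sy n xi' eta' u) (Am xi a u) (Ap xi' a' u) (K0 t u).
    intros [p1 p2] [q1 q2] [s1 s2] [v1 v2] [k1 k2]. rewrite /r /a /a'; Ceq2; ring. }
  apply (is_RInt_plus (V:=C_R_CompleteNormedModule)).
  - apply is_RInt_Cmult, is_CInt. intros z. apply cont_Cmult. apply cont_Cmult.
    apply K0c. apply Am_cont. apply Ap_cont.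
  - apply is_CInt. intros z. apply cont_Cmult. apply K0c. apply Ecore_cont. }
have J1c : forall z, Cc (fun t => Cmult (RtoC (phi t)) (J1 t)) z.
{ intros z. apply cont_Cmult. apply cont_RtoC, phic.
  apply (inner_cont (n:=n) (w:=w) (k:=fun u => Cmult (cis (u * (xi - xi'))) (Cmult (Am xi a u) (Ap xi' a' u)))
    (F:=fun t u => Cmult (Cmult (K0 t u) (Am xi a u)) (Ap xi' a' u))).
  intros y. apply cont_Cmult. apply cont_cis_lin. apply cont_Cmult. apply Am_cont. apply Ap_cont.
  intros t u. unfold K0. generalize (cis (u * (xi - xi'))). intros [c1 c2].
  generalize (Ecore n xi eta xi' eta' u) (Am xi a u) (Ap xi' a' u). intros [p1 p2] [q1 q2] [s1 s2].
  Ceq; ring. }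
have J2c : forall z, Cc (fun t => Cmult (RtoC (phi t)) (J2 t)) z.
{ intros z. apply cont_Cmult. apply cont_RtoC, phic.
  apply (inner_cont (n:=n) (w:=w) (k:=fun u => Cmult (cis (u * (xi - xi'))) (Ecore n xi eta xi' eta' u))
    (F:=fun t u => Cmult (K0 t u) (Ecore n xi eta xi' eta' u))).
  intros y. apply cont_Cmult. apply cont_cis_lin. apply Ecore_cont.
  intros t u. unfold K0. generalize (cis (u * (xi - xi'))). intros [c1 c2].
  generalize (Ecore n xi eta xi' eta' u) (Am xi a u) (Ap xi' a' u). intros [p1 p2] [q1 q2] [s1 s2].
  Ceq; ring. }
change (Mphi phi n xi eta xi' eta') with (Cmult (RtoC r) (CInt (fun t => Cmult (RtoC (phi t)) (J1 t)) 0 1)).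
change (CInt (fun t => Cmult (RtoC (phi t)) (CInt (fun u => Cmult (Cmult (cis (u * (xi - xi'))) (RtoC (FG n (t - u) (vsub eta eta'))))
            (Ecore n xi eta xi' eta' u)) 0 t)) 0 1) with (CInt (fun t => Cmult (RtoC (phi t)) (J2 t)) 0 1).
transitivity (CInt (fun t => Cplus (Cmult (RtoC r) (Cmult (RtoC (phi t)) (J1 t))) (Cmult (RtoC (phi t)) (J2 t))) 0 1).
- unfold LHSint. apply (RInt_ext (V:=C_R_CompleteNormedModule)). intros t _.
  transitivity (Cmult (RtoC (phi t)) (CInt (fun u => Cmult (Cmult (K0 t u) (Sx n xi eta u)) (Sy n xi' eta' u)) 0 t)).
  reflexivity. rewrite step1. generalize (J1 t) (J2 t). intros [p1 p2] [q1 q2]. Ceq2; ring.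
- unfold CInt at 1. apply (is_RInt_unique (V:=C_R_CompleteNormedModule)).
  apply (is_RInt_plus (V:=C_R_CompleteNormedModule)).
  + apply is_RInt_Cmult, is_CInt, J1c.
  + apply is_CInt, J2c.
Qed.


Lemma main_bound d (phi : R -> R) (phic : forall x, continuous phi x) n xi (eta : 'rV[R]_d) xi' (eta' : 'rV[R]_d) k :
  vnorm eta <= INR n -> vnorm eta' <= INR n -> vnorm eta <> 0 -> vnorm eta' <> 0 ->
  0 <= xi -> 0 <= xi' -> 0 <= k <= 1 ->
  (0 < k -> xi <> vnorm eta) -> (0 < k -> xi' <> vnorm eta') ->
  Cmod (CInt (fun t => Cmult (RtoC (phi t))
        (CInt (fun u => Cmult (Cmult (cis (u * (xi - xi'))) (RtoC (FG n (t - u) (vsub eta eta'))))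
            (Ecore n xi eta xi' eta' u)) 0 t)) 0 1)
  <= RInt (fun t => Rabs (phi t)) 0 1 / (vnorm eta * vnorm eta') * bound_bracket k xi eta xi' eta'.
Proof.
intros Hn Hn' H0 H0' Hxi Hxi' Hk Hk1 Hk2.
set K := bound_bracket k xi eta xi' eta' / (vnorm eta * vnorm eta').
have ha : 0 < vnorm eta. have := vnorm_ge0 eta. lra.
have ha' : 0 < vnorm eta'. have := vnorm_ge0 eta'. lra.
have K0 : 0 <= K. apply Rmult_le_pos. apply bracket_nonneg.
  apply Rlt_le, Rinv_0_lt_compat, Rmult_lt_0_compat; lra.
set w := vsub eta eta'.
set J2 := fun t => CInt (fun u => Cmult (Cmult (cis (u * (xi - xi'))) (RtoC (FG n (t - u) w)))
            (Ecore n xi eta xi' eta' u)) 0 t.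
have J2b : forall t, 0 <= t <= 1 -> Cmod (J2 t) <= K.
{ intros t Ht. apply Rle_trans with (t * K).
  2:{ rewrite <- (Rmult_1_l K) at 2. apply Rmult_le_compat_r; lra. }
  unfold J2. apply Cmod_CInt_le.
  - intros z. apply cont_Cmult. apply cont_Cmult. apply cont_cis_lin. apply cont_RtoC, FG_cont_t.
    apply Ecore_cont.
  - lra.
  - intros u Hu. rewrite !Cmod_mult Cmod_cis Cmod_R Rmult_1_l.
    have h1 : Rabs (FG n (t - u) w) <= 1. eapply Rle_trans. apply FG_bound. lra. lra.
    have h2 : Cmod (Ecore n xi eta xi' eta' u) <= K.
    { apply Ebound; try assumption. split; lra. }
    apply Rle_trans with (1 * K); [|right; ring].
    apply Rmult_le_compat. apply Rabs_pos. apply Cmod_ge_0. exact h1. exact h2. }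
have J2c : forall z, Cc J2 z.
{ intros z. unfold J2. apply (inner_cont (n:=n) (w:=w) (k:=fun u => Cmult (cis (u * (xi - xi'))) (Ecore n xi eta xi' eta' u))
    (F:=fun t u => Cmult (Cmult (cis (u * (xi - xi'))) (RtoC (FG n (t - u) w))) (Ecore n xi eta xi' eta' u))).
  intros y. apply cont_Cmult. apply cont_cis_lin. apply Ecore_cont.
  intros t u. generalize (cis (u * (xi - xi'))) (Ecore n xi eta xi' eta' u). intros [p1 p2] [q1 q2].
  apply CeqP; simpl; ring. }
have gc : forall x, continuous (fun t => Rabs (phi t) * K) x.
{ intros x. apply Rcont_mult. apply (@continuous_comp R_UniformSpace R_UniformSpace R_UniformSpace phi Rabs).
  apply phic. apply continuous_Rabs. apply continuous_const. }
change (Cmod (CInt (fun t => Cmult (RtoC (phi t)) (J2 t)) 0 1) <=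
  RInt (fun t => Rabs (phi t)) 0 1 / (vnorm eta * vnorm eta') * bound_bracket k xi eta xi' eta').
apply Rle_trans with (RInt (fun t => Rabs (phi t) * K) 0 1).
- rewrite Cmod_norm. apply (norm_RInt_le (V:=C_R_NormedModule) (fun t => Cmult (RtoC (phi t)) (J2 t))
     (fun t => Rabs (phi t) * K) 0 1).
  lra.
  intros x Hx. rewrite <- Cmod_norm, Cmod_mult, Cmod_R. apply Rmult_le_compat_l. apply Rabs_pos. apply J2b; lra.
  apply is_CInt. intros z. apply cont_Cmult. apply cont_RtoC, phic. apply J2c.
  apply (RInt_correct (V:=R_CompleteNormedModule)). apply (ex_RInt_continuous (V:=R_CompleteNormedModule)). intros; apply gc.
- right. rewrite (RInt_ext (fun t => Rabs (phi t) * K) (fun t => scal K (Rabs (phi t)))).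
  rewrite RInt_scal. unfold K, scal; simpl; unfold mult; simpl. field. lra.
  apply ex_RInt_continuous. intros z _. apply (@continuous_comp R_UniformSpace R_UniformSpace R_UniformSpace phi Rabs).
  apply phic. apply continuous_Rabs.
  intros x _. unfold scal; simpl; unfold mult; simpl. ring.
Qed.

Theorem lemma4p2 (d : nat) (hd : (1 <= d)%nat) (phi : R -> R)
  (hphi : smooth_supp01 phi) :
  exists Rn : nat -> R -> 'rV[R]_d -> R -> 'rV[R]_d -> C,
    (forall (n : nat) (xi : R) (eta : 'rV[R]_d) (xi' : R) (eta' : 'rV[R]_d),
       (1 <= n)%nat -> 0 <= xi -> 0 <= xi' -> ~ (vnorm eta = 0) -> ~ (vnorm eta' = 0) ->
       LHSint phi n xi eta xi' eta' =
       Cmult (RtoC (indic n eta * indic n eta'))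
             (Cplus (Mphi phi n xi eta xi' eta') (Rn n xi eta xi' eta')))
    /\
    (forall kappa : R, 0 <= kappa <= 1 ->
       exists Cst : R,
         forall (n : nat) (xi : R) (eta : 'rV[R]_d) (xi' : R) (eta' : 'rV[R]_d),
           (1 <= n)%nat -> 0 <= xi -> 0 <= xi' -> ~ (vnorm eta = 0) -> ~ (vnorm eta' = 0) ->
           (* vanishing denominators mean the bound is +oo, i.e. trivially true *)
           (0 < kappa -> ~ (xi = vnorm eta)) -> (0 < kappa -> ~ (xi' = vnorm eta')) ->
           Cmod (Rn n xi eta xi' eta') <=
             Cst / (vnorm eta * vnorm eta') * bound_bracket kappa xi eta xi' eta').
Proof.
destruct hphi as [hder _].
have phic : forall x, continuous phi x.
{ intros x. apply: ex_derive_continuous. exact (hder 1%nat x). }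
exists (Rdef d phi). split.
- intros n xi eta xi' eta' _ _ _ H0 H0'. unfold Rdef, indic.
  destruct (Rle_dec (vnorm eta) (INR n)) as [Hn|Hn];
  [destruct (Rle_dec (vnorm eta') (INR n)) as [Hn'|Hn'] |].
  + rewrite (main_eq _ phi phic n xi eta xi' eta' Hn Hn').
    generalize (Mphi phi n xi eta xi' eta'). intros [p1 p2].
    set q := (CInt _ 0 1). clearbody q. destruct q as [q1 q2]. apply CeqP; simpl; ring.
  + rewrite LHS_zero.
    generalize (Mphi phi n xi eta xi' eta'). intros [p1 p2]. apply CeqP; simpl; ring.
    { intros u. rewrite Sy_zero //. generalize (Sx n xi eta u). intros [p1 p2]. apply CeqP; simpl; ring. }
  + rewrite LHS_zero.
    generalize (Mphi phi n xi eta xi' eta'). intros [p1 p2]. apply CeqP; simpl; ring.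
    { intros u. rewrite Sx_zero //. generalize (Sy n xi' eta' u). intros [p1 p2]. apply CeqP; simpl; ring. }
- intros kappa Hk. exists (RInt (fun t => Rabs (phi t)) 0 1).
  intros n xi eta xi' eta' _ Hxi Hxi' H0 H0' Hk1 Hk2. unfold Rdef.
  have ha : 0 < vnorm eta. have := vnorm_ge0 eta. lra.
  have ha' : 0 < vnorm eta'. have := vnorm_ge0 eta'. lra.
  have Hnn : 0 <= RInt (fun t => Rabs (phi t)) 0 1 / (vnorm eta * vnorm eta') * bound_bracket kappa xi eta xi' eta'.
  { apply Rmult_le_pos; [|apply bracket_nonneg]. apply Rmult_le_pos.
    apply RInt_ge_0. lra. apply (ex_RInt_continuous (V:=R_CompleteNormedModule)). intros z _.
    apply (@continuous_comp R_UniformSpace R_UniformSpace R_UniformSpace phi Rabs).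
    apply phic. apply continuous_Rabs.
    intros; apply Rabs_pos.
    apply Rlt_le, Rinv_0_lt_compat, Rmult_lt_0_compat; lra. }
  destruct (Rle_dec (vnorm eta) (INR n)) as [Hn|Hn];
  [destruct (Rle_dec (vnorm eta') (INR n)) as [Hn'|Hn'] |].
  + apply main_bound; auto.
  + rewrite Cmod_R Rabs_R0. exact Hnn.
  + rewrite Cmod_R Rabs_R0. exact Hnn.
Qed.
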